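(* Let $i\in\{1,2\}$ and let \[ F_i(x,q)=\sum_{\lambda\in\mathcal{S}}x^{\ell(\lambda)}q^{|\lambda|_i}, \] where $\mathcal{S}$ is the set of strict partitions. Then \[ q^{3}F_i(x,q) = (1+q^{3}-xq^{3}+xq^{6}+x^{2}q^{7}+x^{2}q^{8})\,F_i(xq^{3},q) -(1-xq^3)(1+xq^6)(1-x^2q^9)\,F_i(xq^{6},q). \]
   Context: A strict partition is a partition with distinct parts (including the empty partition); $\ell(\lambda)$ denotes its number of parts (rows). Identify $\lambda$ with its Young diagram; the box in row $j$ and column $k$ has residue $k-j \bmod 2$. For $i\in\{1,2\}$, $|\lambda|_i$ is the number of boxes of $\lambda$, where boxes whose residue is congruent to $i$ modulo $2$ are counted twice (so for $i=1$ boxes with $k-j$ odd count twice, for $i=2$ boxes with $k-j$ even count twice). *)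

(* Defs.v *)
From mathcomp Require Import all_boot all_order all_algebra.
Set Implicit Arguments. Unset Strict Implicit. Unset Printing Implicit Defensive.
Import GRing.Theory.
Local Open Scope ring_scope.

(* A strict partition is a strictly decreasing sequence of positive parts
   (row j+1 of the Young diagram has length nth 0 s j). *)
Definition strict (s : seq nat) : bool := sorted gtn s && all (fun p => 0 < p)%N s.

(* sp m : all strictly decreasing sequences of integers in {1..m}
   (each exactly once), i.e. all strict partitions with largest part <= m. *)
Fixpoint sp (m : nat) : seq (seq nat) :=
  match m with
  | 0 => [:: [::]]
  | m'.+1 => sp m' ++ [seq m'.+1 :: s | s <- sp m']
  end.

(* |lambda|_i : boxes (j,k) (row j, column k, 1-indexed) counted twice when
   k - j = i (mod 2), i.e. when odd (k + j) == odd i. *)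
Definition wt (i : nat) (s : seq nat) : nat :=
  (\sum_(j0 < size s) \sum_(1 <= k < (nth 0 s j0).+1)
     (if odd (k + j0.+1) == odd i then 2 else 1))%N.

(* Formal power series in q with coefficients in Z[x]:  nat -> {poly int}. *)
Definition series := nat -> {poly int}.

(* Since |lambda| <= |lambda|_i, every strict partition with |lambda|_i = n
   has largest part <= n, hence occurs in sp n. *)
Definition Fcoef (i : nat) : series :=
  fun n => \sum_(s <- sp n | strict s && (wt i s == n)) 'X^(size s).

(* Coefficients of G(x q^k, q) where G is the series f. *)
Definition subst_xq (k : nat) (f : series) : series :=
  fun n => \sum_(m < n.+1) \sum_(a < size (f m) | (m + k * a == n)%N)
             ((f m)`_a)%:P * 'X^a.

(* Product of a polynomial P in q (outer variable) with coefficients in Z[x]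
   (inner variable) by a series f. *)
Definition mulser (P : {poly {poly int}}) (f : series) : series :=
  fun n => \sum_(j < n.+1) P`_j * f (n - j)%N.

Definition xx : {poly {poly int}} := ('X : {poly int})%:P.
Definition qq : {poly {poly int}} := 'X.

Definition polyA5 : {poly {poly int}} :=
  1 + qq ^+ 3 - xx * qq ^+ 3 + xx * qq ^+ 6 + xx ^+ 2 * qq ^+ 7 + xx ^+ 2 * qq ^+ 8.
Definition polyB5 : {poly {poly int}} :=
  (1 - xx * qq ^+ 3) * (1 + xx * qq ^+ 6) * (1 - xx ^+ 2 * qq ^+ 9).

(* Main.v *)
Require Import Defs.
From mathcomp Require Import all_boot all_order all_algebra.
From mathcomp Require Import ring zify.
Import GRing.Theory.
Local Open Scope ring_scope.

Definition cc (i h : nat) : nat := (h + (if odd i then h./2 else h.+1./2))%N.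

Lemma cc_sum i h : (\sum_(1 <= k < h.+1) (if odd (k + 1) == odd i then 2 else 1))%N = cc i h.
Proof.
elim: h => [|h IH]; first by rewrite big_geq // /cc; case: (odd i).
rewrite big_nat_recr // IH /cc addn1 /= negbK.
have E1 : h.+1./2 = (odd h + h./2)%N by rewrite -uphalf_half.
have E2 : h.+2./2 = (h./2).+1 by [].
rewrite uphalf_half; case: (odd i); case: (odd h) => /=; lia.
Qed.

Lemma wt_nil i : wt i [::] = 0%N.
Proof. by rewrite /wt big_ord0. Qed.

Lemma wt_cons i h s : wt i (h :: s) = (cc i h + wt i.+1 s)%N.
Proof.
rewrite /wt big_ord_recl /= -cc_sum; congr addn.
apply: eq_bigr => j _; apply: eq_bigr => k _.
rewrite /bump /= add1n addnS oddS.
by case: (odd (k + j.+1)); case: (odd i).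
Qed.

Lemma wt_odd i j s : odd i = odd j -> wt i s = wt j s.
Proof. by rewrite /wt => ->. Qed.

Definition Phi (i N : nat) : {poly {poly int}} :=
  \sum_(s <- sp N) xx ^+ size s * qq ^+ wt i s.

Lemma Phi0 i : Phi i 0 = 1.
Proof. by rewrite /Phi /= big_cons big_nil wt_nil !expr0 mulr1 addr0. Qed.

Lemma PhiS i m : Phi i m.+1 = Phi i m + xx * qq ^+ cc i m.+1 * Phi i.+1 m.
Proof.
rewrite /Phi /= big_cat big_map /=; congr (_ + _).
rewrite mulr_sumr; apply: eq_bigr => s _; rewrite wt_cons exprS exprD; ring.
Qed.

Lemma Phi_odd i j N : odd i = odd j -> Phi i N = Phi j N.
Proof. move=> h; apply: eq_bigr => s _; by rewrite (@wt_odd i j s h). Qed.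

Lemma cc2 i h : cc i h.+2 = (cc i h + 3)%N.
Proof. rewrite /cc /=. case: (odd i); lia. Qed.
Definition cst : int -> {poly {poly int}} := (@polyC {poly int}) \o (@polyC int).
Definition comp k : {poly int} -> {poly {poly int}} := horner_eval (xx * qq ^+ k) \o map_poly cst.
Definition sig k : {poly {poly int}} -> {poly {poly int}} := horner_eval qq \o map_poly (comp k).
Section S. Variable k : nat.
Implicit Types a b : {poly {poly int}}.
Lemma sigD a b : sig k (a + b) = sig k a + sig k b. Proof. exact: rmorphD. Qed.
Lemma sigB a b : sig k (a - b) = sig k a - sig k b. Proof. exact: rmorphB. Qed.
Lemma sigM a b : sig k (a * b) = sig k a * sig k b. Proof. exact: rmorphM. Qed.
Lemma sig1 : sig k 1 = 1. Proof. exact: rmorph1. Qed.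
Lemma sigX a n : sig k (a ^+ n) = sig k a ^+ n. Proof. exact: rmorphXn. Qed.
End S.

Lemma sigxx k : sig k xx = xx * qq ^+ k.
Proof. rewrite /sig /= map_polyC /= /comp /= map_polyX /horner_eval. by rewrite hornerC hornerX. Qed.
Lemma sigqq k : sig k qq = qq.
Proof. rewrite /sig /= /qq map_polyX. by rewrite /horner_eval hornerX. Qed.

Lemma base1 : qq ^+ 3 * Phi 1 4 = polyA5 * sig 3 (Phi 1 2) - polyB5 * sig 6 (Phi 1 0).
Proof.
rewrite !PhiS !Phi0 /cc /=.
rewrite !(sigD, sigM, sigX, sig1, sigxx, sigqq) /polyA5 /polyB5.
ring.
Qed.
Lemma base2 : qq ^+ 3 * Phi 2 4 = polyA5 * sig 3 (Phi 2 2) - polyB5 * sig 6 (Phi 2 0).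
Proof.
rewrite !PhiS !Phi0 /cc /=.
rewrite !(sigD, sigM, sigX, sig1, sigxx, sigqq) /polyA5 /polyB5.
ring.
Qed.

Lemma key i m : qq ^+ 3 * Phi i (m + 4) = polyA5 * sig 3 (Phi i (m + 2)) - polyB5 * sig 6 (Phi i m).
Proof.
elim: m i => [|m IH] i.
  have [o|e] := boolP (odd i).
    by rewrite add0n !(@Phi_odd i 1) ?o // base1.
  by rewrite add0n !(@Phi_odd i 2) ?(negbTE e) // base2.
rewrite !addSn !PhiS.
have c1 : cc i (m + 4).+1 = (cc i m.+1 + 6)%N.
  have -> : (m + 4).+1 = m.+1.+2.+2 by lia.
  rewrite !cc2; lia.
have c2 : cc i (m + 2).+1 = (cc i m.+1 + 3)%N.
  have -> : (m + 2).+1 = m.+1.+2 by lia.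
  rewrite !cc2; lia.
rewrite c1 c2.
rewrite !(sigD, sigM, sigX, sigxx, sigqq).
set c := cc i m.+1.
have -> : qq ^+ 3 * (Phi i (m + 4) + xx * qq ^+ (c + 6) * Phi i.+1 (m + 4)) =
  qq ^+ 3 * Phi i (m + 4) + xx * qq ^+ c * qq ^+ 6 * (qq ^+ 3 * Phi i.+1 (m + 4)).
  by rewrite exprD; ring.
rewrite IH IH !exprD; ring.
Qed.

Lemma size_mapP {aR rR : nzSemiRingType} (f : aR -> rR) (p : {poly aR}) :
  (size (map_poly f p) <= size p)%N.
Proof. rewrite /map_poly; exact: size_poly. Qed.

Lemma comp_expand k (c : {poly int}) :
  comp k c = \sum_(a < size c) ((c`_a)%:P * 'X^a)%:P * 'X^(k * a).
Proof.
rewrite /comp /= /horner_eval (horner_coef_wide _ (size_mapP _ _)).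
apply: eq_bigr => a _; rewrite coef_map_id0 /cst //=.
rewrite exprMn /xx /qq -exprM -rmorphXn rmorphM /= mulrA [(k * a)%N]mulnC.
done.
Qed.

Lemma comp0 k : comp k 0 = 0. Proof. exact: rmorph0. Qed.

Lemma sig_coef k (f : series) (G : {poly {poly int}}) n :
  (forall m, (m <= n)%N -> f m = G`_m) -> subst_xq k f n = (sig k G)`_n.
Proof.
move=> hf.
rewrite /sig /= /horner_eval (@horner_coef_wide _ (n.+1 + size G)); last first.
  by apply: leq_trans (size_mapP _ _) _; apply: leq_addl.
rewrite coef_sum big_split_ord /= [X in _ + X]big1 ?addr0; last first.
  by move=> m _; rewrite /qq coefMXn ltnS leq_addr.
rewrite /subst_xq; apply: eq_bigr => m _.
have hm : (m <= n)%N by rewrite -ltnS ltn_ord.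
rewrite coef_map_id0 ?comp0 // /qq coefMXn /= ltnNge hm /=.
rewrite comp_expand coef_sum -hf //.
rewrite big_mkcond /=; apply: eq_bigr => a _.
rewrite coefCM coefXn mulr_natr mulrb.
have -> : (n - m == k * a)%N = (m + k * a == n)%N by apply/eqP/eqP; lia.
done.
Qed.

Lemma mulser_coef (P : {poly {poly int}}) (f : series) (G : {poly {poly int}}) n :
  (forall m, (m <= n)%N -> f m = G`_m) -> mulser P f n = (P * G)`_n.
Proof. move=> hf; rewrite /mulser coefM; apply: eq_bigr => j _; by rewrite hf // leq_subr. Qed.

Lemma sp_prop (N : nat) (s : seq nat) : s \in sp N -> strict s && all (fun p => p <= N)%N s.
Proof.
elim: N s => [|N IH] s /=; first by rewrite inE => /eqP ->.
rewrite mem_cat => /orP [/IH /andP [-> hall]|/mapP [t /IH /andP [st hall] ->]].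
  by rewrite /=; apply: sub_all hall => p /= hp; apply: leqW.
move: st; rewrite /strict /= => /andP [sot pos].
rewrite pos andbT leqnn /=; apply/andP; split; last first.
  by apply: sub_all hall => p /= hp; apply: leqW.
case: t sot hall {pos} => [|y t] //= -> /andP [hy _]; rewrite andbT.
by rewrite /gtn /= ltnS.
Qed.

Lemma cc_ge i h : (h <= cc i h)%N.
Proof. by rewrite /cc leq_addr. Qed.

Lemma Phi_coef i N m : (Phi i N)`_m = \sum_(s <- sp N | wt i s == m) 'X^(size s).
Proof.
rewrite /Phi coef_sum [RHS]big_mkcond /=; apply: eq_bigr => s _.
rewrite /xx -rmorphXn coefCM /qq coefXn mulr_natr mulrb eq_sym.
by case: (_ == _).
Qed.

Lemma Fcoef_Phi i m N : (m <= N)%N -> Fcoef i m = (Phi i N)`_m.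
Proof.
move=> hmN; rewrite Phi_coef /Fcoef.
have -> : \sum_(s <- sp m | strict s && (wt i s == m)) ('X^(size s) : {poly int}) =
          \sum_(s <- sp m | wt i s == m) 'X^(size s).
  rewrite big_seq_cond [RHS]big_seq_cond; apply: eq_bigl => s.
  case H: (s \in sp m) => //=.
  by case/andP: (sp_prop _ _ H) => ->.
rewrite -(subnKC hmN); elim: (N - m)%N => [|d IH]; first by rewrite addn0.
rewrite addnS /= big_cat /= IH big_map [X in _ + X]big1 ?addr0 // => s.
rewrite wt_cons => /eqP E; exfalso.
have := cc_ge i (m + d).+1; lia.
Qed.

Theorem mainTheorem5 (i : nat) (hi : i = 1%N \/ i = 2%N) (n : nat) :
  mulser (qq ^+ 3) (Fcoef i) n =
    mulser polyA5 (subst_xq 3 (Fcoef i)) n - mulser polyB5 (subst_xq 6 (Fcoef i)) n.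
Proof.
rewrite (@mulser_coef _ _ (Phi i (n + 4))); last by move=> m hm; apply: Fcoef_Phi; lia.
rewrite (@mulser_coef _ _ (sig 3 (Phi i (n + 2)))); last first.
  move=> m hm; apply: sig_coef => m' hm'; apply: Fcoef_Phi; lia.
rewrite (@mulser_coef _ _ (sig 6 (Phi i n))); last first.
  move=> m hm; apply: sig_coef => m' hm'; apply: Fcoef_Phi; lia.
by rewrite -coefB key.
Qed.
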